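(* Let $G$ be a group and $H\subseteq G$ a subgroup with weak $n$-paradoxical towers for some $n\in\mathbb N$. Then $G$ has weak $n$-paradoxical towers.
   Context: For $n\in\mathbb N$, a group $G$ has weak $n$-paradoxical towers if for every $m\in\mathbb N$ there exist a finite subset $D\subseteq G$ with $|D|\ge m$, subsets $K_1,\dots,K_n\subseteq G$ and elements $g_1,\dots,g_n\in G$ such that for each $j$ the sets $\{dK_j\}_{d\in D}$ are pairwise disjoint, and $\bigcup_{j=1}^n g_jK_j=G$. *)

(* Defs.v *)
From Stdlib Require Import List Arith.
Import ListNotations.

(* A group: carrier with associative multiplication, left identity and
   left inverses (these axioms imply the usual two-sided ones). *)
Record group := Group {
  carrier :> Type;
  gmul : carrier -> carrier -> carrier;
  gone : carrier;
  ginv : carrier -> carrier;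
  gmulA : forall x y z, gmul x (gmul y z) = gmul (gmul x y) z;
  gmul1 : forall x, gmul gone x = x;
  gmulV : forall x, gmul (ginv x) x = gone
}.

Definition is_subgroup (G : group) (H : G -> Prop) : Prop :=
  H (gone G) /\
  (forall x y, H x -> H y -> H (gmul G x y)) /\
  (forall x, H x -> H (ginv G x)).

(* Weak n-paradoxical towers of the group S (a subgroup of G, with the
   group structure inherited from G): all data D, K_j, g_j live inside S. *)
Definition weak_paradoxical_towers_in (G : group) (S : G -> Prop) (n : nat)
  : Prop :=
  forall m : nat,
  exists (D : list G) (K : nat -> G -> Prop) (g : nat -> G),
    NoDup D /\ m <= length D /\
    (forall d, In d D -> S d) /\
    (forall j, j < n -> forall k, K j k -> S k) /\
    (forall j, j < n -> S (g j)) /\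
    (forall j, j < n -> forall d d', In d D -> In d' D -> d <> d' ->
       forall k k', K j k -> K j k' -> gmul G d k <> gmul G d' k') /\
    (forall x, S x -> exists j, j < n /\ exists k, K j k /\ x = gmul G (g j) k).

Definition weak_paradoxical_towers (G : group) (n : nat) : Prop :=
  weak_paradoxical_towers_in G (fun _ => True) n.

(* Main.v *)
Require Import Defs.
From Stdlib Require Import List Arith.
From Stdlib Require Import ClassicalEpsilon FunctionalExtensionality PropExtensionality.

Section GL.
Variable G : group.
Notation "x * y" := (gmul G x y).
Notation "x ^-1" := (ginv G x) (at level 3).
Notation "1" := (gone G).

Lemma mulgV (x : G) : x * x^-1 = 1.
Proof.
  assert (E : (x * x^-1) * (x * x^-1) = x * x^-1).
  { rewrite <- gmulA, (gmulA G x^-1 x), gmulV, gmul1. reflexivity. }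
  rewrite <- (gmul1 G (x * x^-1)), <- (gmulV G (x * x^-1)), <- gmulA, E.
  reflexivity.
Qed.

Lemma mulg1 (x : G) : x * 1 = x.
Proof. rewrite <- (gmulV G x), gmulA, mulgV, gmul1. reflexivity. Qed.

Lemma mulKg (a b : G) : a^-1 * (a * b) = b.
Proof. rewrite gmulA, gmulV, gmul1; reflexivity. Qed.

Lemma mulgK (a b : G) : (a * b) * b^-1 = a.
Proof. rewrite <- gmulA, mulgV, mulg1; reflexivity. Qed.

Lemma invM (a b : G) : (a * b)^-1 = b^-1 * a^-1.
Proof.
  assert (E : (a*b)^-1 * (a*b) = (b^-1 * a^-1) * (a * b)).
  { rewrite gmulV. rewrite <- gmulA, mulKg, gmulV. reflexivity. }
  rewrite <- (mulgK ((a*b)^-1) (a*b)), E, mulgK. reflexivity.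
Qed.

Lemma invK (a : G) : (a^-1)^-1 = a.
Proof.
  rewrite <- (mulg1 ((a^-1)^-1)), <- (gmulV G a), mulKg. reflexivity.
Qed.
End GL.

Theorem proposition3p12 (G : group) (H : G -> Prop) (n : nat) :
  is_subgroup G H ->
  weak_paradoxical_towers_in G H n ->
  weak_paradoxical_towers G n.
Proof.
  intros [H1 [HM HI]] HW m.
  destruct (HW m) as [D [K [g [ND [Hlen [HD [HK [Hg [Hdis Hcov]]]]]]]]].
  set (R := fun a b : G => H (gmul G a (ginv G b))).
  assert (Rsym : forall a b, R a b -> R b a).
  { intros a b h. unfold R in *. apply HI in h. rewrite invM, invK in h. exact h. }
  assert (Rtr : forall a b c, R a b -> R b c -> R a c).
  { intros a b c h1 h2. unfold R in *. pose proof (HM _ _ h1 h2) as h.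
    rewrite <- gmulA, (gmulA G (ginv G b)), gmulV, gmul1 in h. exact h. }
  set (r := fun x : G => epsilon (inhabits (gone G)) (fun t => R t x)).
  assert (Rr : forall x, R (r x) x).
  { intro x. unfold r. apply (epsilon_spec (inhabits (gone G)) (fun t => R t x)).
    exists x. change (H (gmul G x (ginv G x))). rewrite mulgV. exact H1. }
  assert (req : forall x y, R x y -> r x = r y).
  { intros x y h. unfold r.
    assert (E : (fun t => R t x) = (fun t => R t y)).
    { apply functional_extensionality; intro t; apply propositional_extensionality.
      split; intro h'; eauto. }
    rewrite E. reflexivity. }
  exists D, (fun j y => exists k t, K j k /\ r t = t /\ y = gmul G k t), g.
  repeat split; auto.
  - intros j hj d d' hd hd' hne y y' [k [t [hk [ht ->]]]] [k' [t' [hk' [ht' ->]]]] E.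
    rewrite !gmulA in E.
    assert (Htt : R t t').
    { unfold R.
      assert (E2 : gmul G t (ginv G t') = gmul G (ginv G (gmul G d k)) (gmul G d' k')).
      { rewrite <- (mulKg G (gmul G d k) t), E, <- gmulA, mulgK. reflexivity. }
      rewrite E2. apply HM; [apply HI|]; apply HM; eauto. }
    assert (t = t') by (rewrite <- ht, <- ht'; apply req; exact Htt). subst t'.
    apply (Hdis j hj d d' hd hd' hne k k' hk hk').
    rewrite <- (mulgK G (gmul G d k) t), E, mulgK. reflexivity.
  - intros x _.
    assert (hh : H (gmul G x (ginv G (r x)))).
    { apply Rsym. apply Rr. }
    destruct (Hcov _ hh) as [j [hj [k [hk Ek]]]].
    exists j. split; [exact hj|]. exists (gmul G k (r x)). split.
    + exists k, (r x). repeat split; auto.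
    + rewrite gmulA, <- Ek, <- gmulA, gmulV, mulg1. reflexivity.
Qed.
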